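(* Let $F$ be a subfield of $\mathbb{R}$ and let $\sigma$ be an $F$-simplex. Then for every dihedral angle $\theta$ of $\sigma$ (the angle between two faces of $\sigma$ of the form $\mathrm{conv}(S\cup\{s\})$ and $\mathrm{conv}(S\cup\{t\})$ for a set $S$ of vertices and distinct vertices $s,t\notin S$), the square of each trigonometric function of $\theta$ (where defined) lies in $F$; in particular $\cos^2\theta\in F$.
   Context: A Euclidean simplex is an $F$-simplex if the square of the length of each of its edges ($1$-cells) lies in $F$. *)

(* Defs.v *)
From HB Require Import structures.
From mathcomp Require Import all_boot all_order all_algebra.
From mathcomp Require Import all_classical all_reals all_analysis.
Set Implicit Arguments. Unset Strict Implicit. Unset Printing Implicit Defensive.
Import Order.TTheory GRing.Theory Num.Theory.
Local Open Scope ring_scope.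

Definition dotp (R : realType) (n : nat) (u w : 'rV[R]_n) : R := (u *m w^T) 0 0.
Definition vnorm (R : realType) (n : nat) (u : 'rV[R]_n) : R := Num.sqrt (dotp u u).

Definition affinely_independent (R : realType) (n k : nat)
  (v : 'I_k.+1 -> 'rV[R]_n) : Prop :=
  row_free (\matrix_(i < k) (v (lift ord0 i) - v ord0)).

Definition F_simplex (R : realType) (F : {pred R}) (n k : nat)
  (v : 'I_k.+1 -> 'rV[R]_n) : Prop :=
  affinely_independent v /\
  forall i j : 'I_k.+1, dotp (v i - v j) (v i - v j) \in F.

Definition in_aff_hull (R : realType) (n k : nat) (v : 'I_k.+1 -> 'rV[R]_n)
  (S : {set 'I_k.+1}) (p : 'rV[R]_n) : Prop :=
  exists lam : 'I_k.+1 -> R,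
    \sum_(i in S) lam i = 1 /\ p = \sum_(i in S) lam i *: v i.

Definition is_foot (R : realType) (n k : nat) (v : 'I_k.+1 -> 'rV[R]_n)
  (S : {set 'I_k.+1}) (x p : 'rV[R]_n) : Prop :=
  in_aff_hull v S p /\
  forall i j, i \in S -> j \in S -> dotp (x - p) (v i - v j) = 0.

(* theta is the dihedral angle of the simplex v between the faces
   conv(S u {s}) and conv(S u {t}) (along the common face conv(S)):
   the angle in [0, pi] between the components of v s and v t orthogonal
   to the affine hull of S. *)
Definition dihedral_angle (R : realType) (n k : nat) (v : 'I_k.+1 -> 'rV[R]_n)
  (S : {set 'I_k.+1}) (s t : 'I_k.+1) (theta : R) : Prop :=
  (0 < #|S|)%N /\ s != t /\ s \notin S /\ t \notin S /\
  exists p q : 'rV[R]_n,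
    is_foot v S (v s) p /\ is_foot v S (v t) q /\
    0 <= theta <= pi /\
    cos theta = dotp (v s - p) (v t - q) / (vnorm (v s - p) * vnorm (v t - q)).

(* Main.v *)
Require Import Defs.
From HB Require Import structures.
From mathcomp Require Import all_boot all_order all_algebra.
From mathcomp Require Import all_classical all_reals all_analysis.
From mathcomp Require Import ring.
Import Order.TTheory GRing.Theory Num.Theory.
Local Open Scope ring_scope.

Section Dot.
Context {R : realType} {n : nat}.
Implicit Types u w z : 'rV[R]_n.

Lemma dotpE u w : dotp u w = \sum_j u 0 j * w 0 j.
Proof. by rewrite /dotp mxE; apply: eq_bigr => j _; rewrite mxE. Qed.

Lemma dotpC u w : dotp u w = dotp w u.
Proof. by rewrite !dotpE; apply: eq_bigr => j _; rewrite mulrC. Qed.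

Lemma dotpDl u w z : dotp (u + w) z = dotp u z + dotp w z.
Proof. by rewrite !dotpE -big_split; apply: eq_bigr => j _; rewrite mxE mulrDl. Qed.

Lemma dotpNl u z : dotp (- u) z = - dotp u z.
Proof. by rewrite !dotpE -sumrN; apply: eq_bigr => j _; rewrite mxE mulNr. Qed.

Lemma dotpBl u w z : dotp (u - w) z = dotp u z - dotp w z.
Proof. by rewrite dotpDl dotpNl. Qed.

Lemma dotpZl c u z : dotp (c *: u) z = c * dotp u z.
Proof. by rewrite !dotpE mulr_sumr; apply: eq_bigr => j _; rewrite mxE mulrA. Qed.

Lemma dotp0l z : dotp 0 z = 0.
Proof. by rewrite dotpE big1 // => j _; rewrite mxE mul0r. Qed.

Lemma dotpDr u w z : dotp z (u + w) = dotp z u + dotp z w.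
Proof. by rewrite dotpC dotpDl !(dotpC z). Qed.
Lemma dotpBr u w z : dotp z (u - w) = dotp z u - dotp z w.
Proof. by rewrite dotpC dotpBl !(dotpC z). Qed.
Lemma dotpZr c u z : dotp z (c *: u) = c * dotp z u.
Proof. by rewrite dotpC dotpZl (dotpC z). Qed.
Lemma dotp0r z : dotp z 0 = 0.
Proof. by rewrite dotpC dotp0l. Qed.

Lemma dotp_ge0 u : 0 <= dotp u u.
Proof. by rewrite dotpE sumr_ge0 // => j _; rewrite -expr2 sqr_ge0. Qed.

Lemma dotp_eq0 u : dotp u u = 0 -> u = 0.
Proof.
rewrite dotpE => /psumr_eq0P H.
apply/matrixP => i j; rewrite ord1 mxE.
have /eqP := H (fun j _ => ltac:(by rewrite -expr2 sqr_ge0)) j isT.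
by rewrite mulf_eq0 orbb => /eqP.
Qed.

Lemma dotp_sumr (I : finType) (P : pred I) (f : I -> 'rV[R]_n) z :
  dotp z (\sum_(i | P i) f i) = \sum_(i | P i) dotp z (f i).
Proof.
apply: (big_ind2 (fun a b => dotp z a = b)) => //.
- exact: dotp0r.
- by move=> a b c d <- <-; rewrite dotpDr.
Qed.

End Dot.

Section FClosed.
Context {R : realType} (F : {pred R}) (hF : divring_closed F).

Lemma F1 : 1 \in F. Proof. by case: hF. Qed.
Lemma FB x y : x \in F -> y \in F -> x - y \in F.
Proof. by case: hF => _ h _; apply: h. Qed.
Lemma FdivC x y : x \in F -> y \in F -> x / y \in F.
Proof. by case: hF => _ _ h; apply: h. Qed.
Lemma F0 : 0 \in F. Proof. by rewrite -(subrr 1) FB // F1. Qed.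
Lemma FN x : x \in F -> - x \in F. Proof. by move=> h; rewrite -sub0r FB // F0. Qed.
Lemma FD x y : x \in F -> y \in F -> x + y \in F.
Proof. by move=> hx hy; rewrite -(opprK y) FB // FN. Qed.
Lemma FV x : x \in F -> x^-1 \in F.
Proof. by move=> hx; rewrite -div1r FdivC // F1. Qed.
Lemma FM x y : x \in F -> y \in F -> x * y \in F.
Proof. by move=> hx hy; rewrite -(invrK y) FdivC // FV. Qed.
Lemma FX x m : x \in F -> x ^+ m \in F.
Proof. by move=> hx; elim: m => [|m IH]; rewrite ?expr0 ?F1 // exprS FM. Qed.

Context {n : nat}.

Fixpoint Fspan (ws : seq 'rV[R]_n) (y : 'rV[R]_n) : Prop :=
  match ws with
  | [::] => y = 0
  | w :: ws' => exists c, c \in F /\ exists y', Fspan ws' y' /\ y = c *: w + y'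
  end.

Lemma Fspan0 ws : Fspan ws 0.
Proof. elim: ws => [|w ws IH] //=; exists 0; split; first exact: F0.
by exists 0; split => //; rewrite scale0r addr0. Qed.

Lemma Fspan_add ws y z : Fspan ws y -> Fspan ws z -> Fspan ws (y + z).
Proof.
elim: ws y z => [|w ws IH] y z /=; first by move=> -> ->; rewrite addr0.
move=> [c [hc [y' [hy ->]]]] [d [hd [z' [hz ->]]]].
exists (c + d); split; first exact: FD.
exists (y' + z'); split; first exact: IH.
by rewrite scalerDl -!addrA; congr (_ + _); rewrite addrCA.
Qed.

Lemma Fspan_scale ws c y : c \in F -> Fspan ws y -> Fspan ws (c *: y).
Proof.
elim: ws y => [|w ws IH] y hc /=; first by move=> ->; rewrite scaler0.
move=> [d [hd [y' [hy ->]]]].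
exists (c * d); split; first exact: FM.
exists (c *: y'); split; first exact: IH.
by rewrite scalerDr scalerA.
Qed.

Lemma Fspan_sub ws y z : Fspan ws y -> Fspan ws z -> Fspan ws (y - z).
Proof.
move=> hy hz; apply: Fspan_add => //.
by rewrite -scaleN1r; apply: Fspan_scale => //; apply: FN; apply: F1.
Qed.

Lemma Fspan_cons w ws y : Fspan ws y -> Fspan (w :: ws) y.
Proof. by move=> h; exists 0; split; [exact: F0| exists y; rewrite scale0r add0r]. Qed.

Lemma Fspan_mem ws w : w \in ws -> Fspan ws w.
Proof.
elim: ws => [|u ws IH] //=; rewrite in_cons => /orP [/eqP ->|h].
  by exists 1; split; [exact: F1|exists 0; rewrite scale1r addr0; split => //; exact: Fspan0].
by apply: Fspan_cons; apply: IH.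
Qed.

Lemma Fspan_orth {ws y z} : Fspan ws y -> (forall w, w \in ws -> dotp z w = 0) ->
  dotp z y = 0.
Proof.
elim: ws y => [|w ws IH] y /=; first by move=> -> _; rewrite dotp0r.
move=> [c [hc [y' [hy ->]]]] h.
rewrite dotpDr dotpZr h ?mem_head // mulr0 add0r IH // => u hu.
by apply: h; rewrite in_cons hu orbT.
Qed.

Lemma Fspan_dotF {ws y z} : Fspan ws y -> (forall w, w \in ws -> dotp z w \in F) ->
  dotp z y \in F.
Proof.
elim: ws y => [|w ws IH] y /=; first by move=> -> _; rewrite dotp0r F0.
move=> [c [hc [y' [hy ->]]]] h.
rewrite dotpDr dotpZr; apply: FD; first by apply: FM => //; apply: h; rewrite mem_head.
apply: IH => // u hu.
by apply: h; rewrite in_cons hu orbT.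
Qed.

Definition Fgram (ws : seq 'rV[R]_n) :=
  forall w1 w2, w1 \in ws -> w2 \in ws -> dotp w1 w2 \in F.

Lemma Fspan_bil ws y z : Fgram ws -> Fspan ws y -> Fspan ws z -> dotp y z \in F.
Proof.
move=> hg hy hz. apply: (Fspan_dotF hz) => w hw.
by rewrite dotpC; apply: (Fspan_dotF hy) => u hu; apply: hg.
Qed.

Lemma Fproj ws : Fgram ws -> forall x, (forall w, w \in ws -> dotp x w \in F) ->
  exists y, Fspan ws y /\ forall w, w \in ws -> dotp (x - y) w = 0.
Proof.
elim: ws => [|w ws IH] hg x hx.
  by exists 0; split => //.
have hg' : Fgram ws by move=> a b ha hb; apply: hg; rewrite in_cons ?ha ?hb orbT.
have [m [hm hmo]] : exists y, Fspan ws y /\ forall u, u \in ws -> dotp (w - y) u = 0.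
  by apply: IH => // u hu; apply: hg; rewrite ?mem_head ?in_cons ?hu ?orbT.
have [yx [hyx hyxo]] : exists y, Fspan ws y /\ forall u, u \in ws -> dotp (x - y) u = 0.
  by apply: IH => // u hu; apply: hx; rewrite in_cons hu orbT.
set w' := w - m.
set x' := x - yx.
have hxm : dotp x' m = 0 by apply: (Fspan_orth hm).
have hw'm : dotp w' m = 0 by apply: (Fspan_orth hm).
have hyxw' : dotp yx w' = 0 by rewrite dotpC; apply: (Fspan_orth hyx).
have [D0|DN] := eqVneq (dotp w' w') 0.
  have w'0 := dotp_eq0 _ D0.
  exists (0 *: w + yx); split.
    by exists 0; split; [exact: F0| exists yx].
  move=> u; rewrite in_cons => /orP [/eqP ->|hu]; rewrite scale0r add0r.
    have -> : w = m by apply/eqP; rewrite -subr_eq0 -/w' w'0.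
    exact: hxm.
  exact: hyxo.
set c := dotp x' w' / dotp w' w'.
have hxw' : dotp x' w' \in F.
  rewrite /x' dotpBl hyxw' subr0 /w' dotpBr FB ?(hx _ (mem_head _ _)) //.
  apply: (Fspan_dotF hm) => u hu; apply: hx; by rewrite in_cons hu orbT.
have hw'w' : dotp w' w' \in F.
  rewrite {1}/w' dotpBl (dotpC m) hw'm subr0 /w' dotpBr FB ?(hg _ _ (mem_head _ _) (mem_head _ _)) //.
  apply: (Fspan_dotF hm) => u hu; apply: hg; by rewrite ?mem_head ?in_cons ?hu ?orbT.
have hc : c \in F by apply: FdivC.
exists (c *: w + (yx - c *: m)); split.
  exists c; split => //; exists (yx - c *: m); split => //.
  by apply: Fspan_sub => //; apply: Fspan_scale.
have -> : x - (c *: w + (yx - c *: m)) = x' - c *: w'.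
  rewrite /x' /w' scalerBr opprD opprB opprB addrA -!addrA; congr (_ + _).
  by rewrite addrCA [RHS]addrCA; congr (_ + _); exact: addrC.
move=> u; rewrite in_cons => /orP [/eqP ->|hu].
  have -> : w = w' + m by rewrite /w' subrK.
  by rewrite dotpDr !(dotpBl x') !dotpZl hw'm mulr0 subr0 hxm addr0 /c mulfVK // subrr.
by rewrite dotpBl dotpZl hyxo // hmo // mulr0 subr0.
Qed.
End FClosed.

Lemma polar {R : realType} (F : {pred R}) (hF : divring_closed F) (n k : nat)
  (v : 'I_k.+1 -> 'rV[R]_n)
  (hv : forall i j, dotp (v i - v j) (v i - v j) \in F) a b c d :
  dotp (v a - v b) (v c - v d) \in F.
Proof.
have e : 2 * dotp (v a - v b) (v c - v d) =
  dotp (v a - v d) (v a - v d) + dotp (v b - v c) (v b - v c)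
  - dotp (v a - v c) (v a - v c) - dotp (v b - v d) (v b - v d).
  rewrite !dotpE mulr_sumr -big_split -!sumrB; apply: eq_bigr => j _; rewrite !mxE /=.
  ring.
have h2 : (2 : R) != 0 by rewrite pnatr_eq0.
have -> : dotp (v a - v b) (v c - v d) = 2^-1 * (2 * dotp (v a - v b) (v c - v d)).
  by rewrite mulKf.
rewrite e; apply: FM => //.
  by apply: FV => //; rewrite -[2%R]/(1 + 1)%R; apply: FD => //; apply: F1.
by repeat apply: FB => //; apply: FD.
Qed.

Lemma foot_eq {R : realType} (F : {pred R}) (n k : nat)
  (v : 'I_k.+1 -> 'rV[R]_n) (S : {set 'I_k.+1}) s0 (hs0 : s0 \in S) x p y :
  is_foot v S x p ->
  Fspan F [seq v i - v s0 | i <- enum S] y ->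
  (forall w, w \in [seq v i - v s0 | i <- enum S] -> dotp (x - v s0 - y) w = 0) ->
  p = v s0 + y.
Proof.
move=> [[lam [hsum hp]] horth] hy hyo.
set d := p - (v s0 + y).
have hd : forall w, w \in [seq v i - v s0 | i <- enum S] -> dotp d w = 0.
  move=> w hw; have := hyo w hw; move: hw => /mapP [i]; rewrite mem_enum => hi ->.
  have -> : d = (x - v s0 - y) - (x - p).
    by rewrite /d opprB [RHS]addrC -!addrA addKr opprD.
  by move=> H; rewrite dotpBl H horth // subr0.
have hpv : p - v s0 = \sum_(i in S) lam i *: (v i - v s0).
  symmetry; under eq_bigr => i _ do rewrite scalerBr.
  by rewrite sumrB -scaler_suml hsum scale1r hp.
have : dotp d d = 0.
  have hdd : d = (p - v s0) - y by rewrite /d opprD addrA.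
  rewrite {2}hdd hpv dotpBr dotp_sumr (Fspan_orth _ hy hd) subr0 big1 // => i hi.
  rewrite dotpZr hd ?mulr0 //; apply: (map_f (fun j => v j - v s0)); by rewrite mem_enum.
move=> /dotp_eq0 /eqP; rewrite subr_eq0 => /eqP //.
Qed.

Theorem lemma6p4 (R : realType) (F : {pred R}) (hF : divring_closed F)
  (n k : nat) (v : 'I_k.+1 -> 'rV[R]_n) (hv : F_simplex F v)
  (S : {set 'I_k.+1}) (s t : 'I_k.+1) (theta : R)
  (htheta : dihedral_angle v S s t theta) :
  [/\ cos theta ^+ 2 \in F,
      sin theta ^+ 2 \in F,
      cos theta != 0 -> tan theta ^+ 2 \in F /\ (cos theta ^+ 2)^-1 \in F
    & sin theta != 0 -> (cos theta / sin theta) ^+ 2 \in F /\ (sin theta ^+ 2)^-1 \in F].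
Proof.
move: htheta => [S0 [_ [_ [_ [p [q [hp [hq [_ hcos]]]]]]]]].
have [s0 hs0] := card_gt0P S0.
have hpol := polar _ hF _ _ _ hv.2.
set ws := [seq v i - v s0 | i <- enum S].
set L := (v s - v s0) :: (v t - v s0) :: ws.
have hL : forall u, u \in L -> exists a b, u = v a - v b.
  move=> u; rewrite !in_cons => /or3P [/eqP ->|/eqP ->|/mapP [i _ ->]]; by do 2 eexists.
have gL : Fgram F L.
  by move=> u1 u2 /hL [a [b ->]] /hL [c [d ->]]; apply: hpol.
have gws : Fgram F ws.
  by move=> u1 u2 h1 h2; apply: gL; rewrite !in_cons ?h1 ?h2 !orbT.
have [y [hy hyo]] : exists y, Fspan F ws y /\
    forall w, w \in ws -> dotp (v s - v s0 - y) w = 0.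
  apply: (Fproj _ hF _ gws) => w hw; apply: gL; by rewrite !in_cons ?hw ?eqxx ?orbT.
have [y2 [hy2 hyo2]] : exists y, Fspan F ws y /\
    forall w, w \in ws -> dotp (v t - v s0 - y) w = 0.
  apply: (Fproj _ hF _ gws) => w hw; apply: gL; by rewrite !in_cons ?hw ?eqxx ?orbT.
have ep := foot_eq _ _ _ _ _ _ hs0 _ _ _ hp hy hyo.
have eq2 := foot_eq _ _ _ _ _ _ hs0 _ _ _ hq hy2 hyo2.
have hspan : forall a z, a \in L -> Fspan F ws z -> Fspan F L (a - z).
  move=> a z ha hz; apply: (Fspan_sub _ hF); first exact: Fspan_mem.
  by rewrite /L; do 2 apply: (Fspan_cons _ hF).
have ha : Fspan F L (v s - p).
  by rewrite ep opprD addrA; apply: hspan => //; rewrite mem_head.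
have hb : Fspan F L (v t - q).
  by rewrite eq2 opprD addrA; apply: hspan => //; rewrite !in_cons eqxx orbT.
have hA := Fspan_bil _ hF _ _ _ gL ha hb.
have hP := Fspan_bil _ hF _ _ _ gL ha ha.
have hQ := Fspan_bil _ hF _ _ _ gL hb hb.
have hc2 : cos theta ^+ 2 \in F.
  rewrite hcos /vnorm expr_div_n exprMn !sqr_sqrtr ?dotp_ge0 //.
  by apply: (FdivC _ hF) => //; [apply: (FX _ hF) | apply: (FM _ hF)].
have hs2 : sin theta ^+ 2 \in F by rewrite sin2cos2; apply: (FB _ hF) => //; apply: (F1 _ hF).
split => // _; split; rewrite ?expr_div_n /tan ?expr_div_n; by [apply: (FdivC _ hF) | apply: (FV _ hF)].
Qed.
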